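(* Let $R$ be a unital ring with involution and let $a,b\in R$ both be core invertible with $a\overset{\circledast}{\leq} b$. Then: (1) $ab$, $a^2$ and $ba$ are core invertible and $(ab)^{\circledast}=b^{\circledast}a^{\circledast}=(a^{\circledast})^{2}=(a^{2})^{\circledast}=(ba)^{\circledast}$; (2) if moreover $a$ is an EP element, then $ab$ is an EP element.
   Context: $R$ is a ring with identity and an involution $x\mapsto x^{*}$. An element $a\in R$ is core invertible if there exists $x\in R$ with $axa=a$, $xR=aR$ and $Rx=Ra^{*}$; such $x$ is unique, called the core inverse of $a$ and denoted $a^{\circledast}$. For $a$ core invertible and $b\in R$, $a\overset{\circledast}{\leq} b$ means $a^{\circledast}a=a^{\circledast}b$ and $aa^{\circledast}=ba^{\circledast}$. The Moore–Penrose inverse of $a$ is the (unique if it exists) $x$ with $axa=a$, $xax=x$, $(ax)^*=ax$, $(xa)^*=xa$, denoted $a^{\dagger}$. The group inverse of $a$ is the (unique if it exists) $x$ with $axa=a$, $xax=x$, $ax=xa$, denoted $a^{\#}$. An element $a$ is EP if both $a^{\dagger}$ and $a^{\#}$ exist and $a^{\dagger}=a^{\#}$. *)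

(* Defs.v *)
From HB Require Import structures.
From mathcomp Require Import all_boot all_order all_algebra.
Set Implicit Arguments. Unset Strict Implicit. Unset Printing Implicit Defensive.
Import GRing.Theory.
Local Open Scope ring_scope.

Definition involution (R : pzRingType) (star : R -> R) : Prop :=
  [/\ forall x y : R, star (x + y) = star x + star y,
      forall x y : R, star (x * y) = star y * star x
    & forall x : R, star (star x) = x].

Definition same_right_ideal (R : pzRingType) (x y : R) : Prop :=
  (exists r : R, x = y * r) /\ (exists s : R, y = x * s).
Definition same_left_ideal (R : pzRingType) (x y : R) : Prop :=
  (exists r : R, x = r * y) /\ (exists s : R, y = s * x).

Definition is_core_inverse (R : pzRingType) (star : R -> R) (a x : R) : Prop :=
  [/\ a * x * a = a, same_right_ideal x a & same_left_ideal x (star a)].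

Definition core_invertible (R : pzRingType) (star : R -> R) (a : R) : Prop :=
  exists x, is_core_inverse star a x.

Definition core_le (R : pzRingType) (star : R -> R) (a xa b : R) : Prop :=
  is_core_inverse star a xa /\ xa * a = xa * b /\ a * xa = b * xa.

Definition is_MP_inverse (R : pzRingType) (star : R -> R) (a x : R) : Prop :=
  [/\ a * x * a = a, x * a * x = x, star (a * x) = a * x & star (x * a) = x * a].

Definition is_group_inverse (R : pzRingType) (a x : R) : Prop :=
  [/\ a * x * a = a, x * a * x = x & a * x = x * a].

Definition EP (R : pzRingType) (star : R -> R) (a : R) : Prop :=
  exists x, is_MP_inverse star a x /\ is_group_inverse a x.

(* Main.v *)
Require Import Defs.
From HB Require Import structures.
From mathcomp Require Import all_boot all_order all_algebra.
Import GRing.Theory.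
Local Open Scope ring_scope.

Lemma core_props (R : pzRingType) (star : R -> R) (a x : R) :
  involution star -> is_core_inverse star a x ->
  [/\ a*x*a = a, x*a*x = x, star (a*x) = a*x, x*(a*a) = a & a*(x*x) = x].
Proof.
move=> [_ sM sK] [axa [[r xr] [s as_]] [[r' xr'] [s' as']]].
have sa : star a = star a * star (a*x) by rewrite -sM axa.
have h1 : x * star (a*x) = x by rewrite {1}xr' -mulrA -sa -xr'.
have e : a*x = a*x*star(a*x) by rewrite -mulrA h1.
have hax : star (a*x) = a*x by rewrite {1}e sM sK -e.
have xax : x*a*x = x by rewrite -mulrA -hax h1.
have xaa : x*(a*a) = a.
  transitivity (x*a*x*s); first by rewrite -!mulrA -as_.
  by rewrite xax -as_.
have axx : a*(x*x) = x.
  transitivity (a*x*a*r); first by rewrite -!mulrA -xr.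
  by rewrite axa -xr.
by split.
Qed.
Arguments core_props {R star a x}.

Lemma core_of5 (R : pzRingType) (star : R -> R) (a x : R) :
  involution star -> a*x*a = a -> x*a*x = x -> star (a*x) = a*x ->
  x*(a*a) = a -> a*(x*x) = x -> is_core_inverse star a x.
Proof.
move=> [_ sM sK] axa xax hax xaa axx; split=> //.
  by split; [exists (x*x) | exists (a*a)].
split.
  exists (x * star x); by rewrite -mulrA -sM hax mulrA xax.
exists (star a * a); by rewrite -mulrA -hax -sM axa.
Qed.
Arguments core_of5 {R star a x}.

Theorem theorem2p10 (R : pzRingType) (star : R -> R) (a b xa xb : R) :
  involution star ->
  is_core_inverse star a xa ->
  is_core_inverse star b xb ->
  core_le star a xa b ->
  ([/\ is_core_inverse star (a * b) (xb * xa),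
       xb * xa = xa ^+ 2,
       is_core_inverse star (a ^+ 2) (xa ^+ 2)
     & is_core_inverse star (b * a) (xa ^+ 2)]
   /\ (EP star a -> EP star (a * b))).
Proof.
move=> inv ca cb [_ [e1 e2]].
have [axa xax hx xaa axx] := core_props inv ca.
have [bxb xbx hy xbb bxx] := core_props inv cb.
set x := xa in axa xax hx xaa axx e1 e2 *.
set y := xb in bxb xbx hy xbb bxx *.
have ba : b*a = a*a.
  transitivity (b*x*(a*a)); first by rewrite -mulrA xaa.
  by rewrite -e2 -mulrA xaa.
have bxx' : b*(x*x) = x by rewrite mulrA -e2 -mulrA axx.
have yx : y*x = x*x.
  transitivity (y*(b*b)*(x*(x*x))).
    by rewrite -!mulrA (mulrA x x x) (mulrA b (x*x) x) bxx' bxx'.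
  by rewrite xbb (mulrA x x x) (mulrA b (x*x) x) bxx'.
have abxx : a*b*(x*x) = a*x by rewrite -mulrA bxx'.
have a2x : a*a*(x*x) = a*x by rewrite -mulrA axx.
have x2a : x*x*(a*a) = x*a by rewrite -mulrA xaa.
have a2 : is_core_inverse star (a*a) (x*x).
  apply: core_of5 => //.
  - by rewrite a2x -mulrA xaa.
  - by rewrite x2a mulrA xax.
  - by rewrite a2x.
  - by rewrite (mulrA (x*x) (a*a) (a*a)) x2a -(mulrA x a (a*a)) (mulrA a a a) (mulrA x (a*a) a) xaa.
  - by rewrite (mulrA (a*a) (x*x) (x*x)) a2x -mulrA (mulrA x x x) (mulrA a (x*x) x) axx.
have abA : a*b*(x*x)*(a*b) = a*b by rewrite abxx mulrA axa.
have abB : x*x*(a*b)*(x*x) = x*x.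
  by rewrite -(mulrA (x*x) (a*b) (x*x)) abxx -(mulrA x x (a*x)) (mulrA x a x) xax.
have ab : is_core_inverse star (a*b) (x*x).
  apply: core_of5 => //.
  - by rewrite abxx.
  - rewrite (mulrA (a*b) a b) -(mulrA a b a) ba (mulrA a a a) !mulrA.
    by rewrite -(mulrA (x*x) a a) x2a -(mulrA x a a) xaa.
  - by rewrite (mulrA (a*b) (x*x) (x*x)) abxx -mulrA (mulrA x x x) (mulrA a (x*x) x) axx.
split.
  split.
  - by rewrite yx.
  - by rewrite yx expr2.
  - by rewrite !expr2.
  - by rewrite ba !expr2.
move=> [z [[aza zaz hz hz'] [_ _ cz]]].
have [_ sM sK] := inv.
have axz : a*x = a*z.
  have p1 : a*x*(a*z) = a*z by rewrite mulrA axa.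
  have p2 : a*z*(a*x) = a*x by rewrite mulrA aza.
  by rewrite -hx -p2 sM hx hz p1.
have xaz : x*a = a*z.
  transitivity (x*(a*z*a)); first by rewrite aza.
  by rewrite -(mulrA a z a) -cz (mulrA a a z) mulrA xaa.
have xa_ax : x*a = a*x by rewrite xaz axz.
have wab : x*x*(a*b) = x*a.
  by rewrite !mulrA -(mulrA x x a) xa_ax (mulrA x a x) xax -e1 xa_ax.
exists (x*x); split; split => //.
- by rewrite abxx.
- by rewrite wab xa_ax.
- by rewrite abxx wab xa_ax.
Qed.
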